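(* Let $H$ be a finite field, $\mathbb{F}$ an extension of $H$ of degree $m$, $n=|\mathbb{F}|$, $d<n$, $\delta=1-d/n\ge3/4$, and $0<\rho\le\delta/8$. Let $f\colon\mathbb{F}^m\to\mathbb{F}$ and $x\in\mathbb{F}^m$ with $f(x)\neq0$, and let $R\ge1$. Run the $R$-step $H$-plane-line random walk from $x$, and fix $h_0,h'_0$ (hence $P_0$) such that $\mathrm{dist}_{\{(0,0)\}}(f|_{P_0},\mathrm{RM}_{\mathbb{F}}(2,d))<\rho$. For $i\in[R]$ let $F_i$ be the event that $N(\ell_i)\ge2\rho n$ and $N(P_i)\ge(\delta-2\rho)n^2$, let $E_i$ be the event that $N(\ell_i)\ge2\rho n$ and $N(P_i)<(\delta-2\rho)n^2$, and let $\epsilon_i=\Pr[F_1\wedge\dots\wedge F_{i-1}\wedge E_i]$. Then, with all probabilities taken over the remaining randomness of the walk (with $P_0$ fixed), \[ \Pr[F_1\wedge\dots\wedge F_R]\ge\Big(1-\frac4n\Big)^R-\sum_{i=1}^R\epsilon_i. \]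
   Context: $\mathrm{RM}_{\mathbb{F}}(2,d)$ is the set of evaluation tables $\mathbb{F}^2\to\mathbb{F}$ of bivariate polynomials of total degree at most $d$. For $a,h,h'\in\mathbb{F}^m$, the plane $P=(a,h,h')$ has restriction $f|_P\colon\mathbb{F}^2\to\mathbb{F}$, $(t,s)\mapsto f(a+th+sh')$, and $N(P)=|\{(t,s)\in\mathbb{F}^2: f|_P(t,s)\ne0\}|$. For a line $\ell=\{b+tu:t\in\mathbb{F}\}$ (given by $b,u$), $N(\ell)=|\{t\in\mathbb{F}:f(b+tu)\ne0\}|$. Weighted distance: for strings $u,v$ indexed by $I$ with $|I|=N$ and $\emptyset\ne A\subseteq I$, $\mathrm{dist}_A(u,v)=\frac{|\{i\in A:u_i\ne v_i\}|}{2|A|}+\frac{|\{i\in I:u_i\ne v_i\}|}{2N}$, $\mathrm{dist}_A(u,S)=\min_{v\in S}\mathrm{dist}_A(u,v)$. The $R$-step $H$-plane-line random walk from $x$: set $x_0=x$, choose $h_0,h_0'\in H^m$ uniformly, $P_0=(x_0,h_0,h_0')$. For $i=1,\dots,R$: choose $s_{i-1},s'_{i-1},t_{i-1},t'_{i-1}\in\mathbb{F}$ uniformly, set $x_i=x_{i-1}+s_{i-1}h_{i-1}+s'_{i-1}h'_{i-1}$, $h_i=t_{i-1}h_{i-1}+t'_{i-1}h'_{i-1}$, the line $\ell_i=\{x_i+th_i:t\in\mathbb{F}\}$, choose $h'_i\in H^m$ uniformly, and set $P_i=(x_i,h_i,h'_i)$. All random choices are independent. *)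

(* Defs.v *)
From HB Require Import structures.
From mathcomp Require Import all_boot all_order all_algebra.
Set Implicit Arguments. Unset Strict Implicit. Unset Printing Implicit Defensive.
Import Order.TTheory GRing.Theory Num.Theory.
Local Open Scope ring_scope.

Section PlaneLineWalk.
Variable F : finFieldType.

Definition is_subfield (H : {set F}) : Prop :=
  [/\ 1 \in H,
      {in H &, forall a b, a - b \in H},
      {in H &, forall a b, a * b \in H} &
      {in H, forall a, a^-1 \in H}].

(* F is an extension of H of degree m: for a finite subfield this is |F| = |H|^m. *)
Definition ext_degree (H : {set F}) (m : nat) : Prop :=
  is_subfield H /\ #|[set: F]| = (#|H| ^ m)%N.

Definition inHm (m : nat) (H : {set F}) (h : 'rV[F]_m) : bool :=
  [forall j, h 0 j \in H].

(* RM_F(2,d): evaluation tables of bivariate polynomials of total degree <= d *)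
Definition inRM2 (d : nat) (g : F * F -> F) : Prop :=
  exists c : 'I_d.+1 -> 'I_d.+1 -> F,
    (forall i j : 'I_d.+1, (d < i + j)%N -> c i j = 0) /\
    forall p : F * F,
      g p = \sum_(i < d.+1) \sum_(j < d.+1) c i j * p.1 ^+ i * p.2 ^+ j.

Definition distA (A : {set F * F}) (u v : F * F -> F) : rat :=
  (#|[set i in A | u i != v i]|%:R / (2 * #|A|%:R))
  + (#|[set i : F * F | u i != v i]|%:R / (2 * #|[set: F * F]|%:R)).

Definition distA_RM_lt (A : {set F * F}) (u : F * F -> F) (d : nat) (r : rat) : Prop :=
  exists2 v, inRM2 d v & distA A u v < r.

Definition plane_restr (m : nat) (f : 'rV[F]_m -> F) (a h h' : 'rV[F]_m) :
  F * F -> F := fun p => f (a + p.1 *: h + p.2 *: h').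

Definition Nplane (m : nat) (f : 'rV[F]_m -> F) (a h h' : 'rV[F]_m) : nat :=
  #|[set p : F * F | plane_restr f a h h' p != 0]|.

Definition Nline (m : nat) (f : 'rV[F]_m -> F) (b u : 'rV[F]_m) : nat :=
  #|[set t : F | f (b + t *: u) != 0]|.

(* the random choices of step i: (s_{i-1}, s'_{i-1}, t_{i-1}, t'_{i-1}, h'_i) *)
Definition choice_t (m : nat) := (F * F * F * F * 'rV[F]_m)%type.

Definition walk_step (m : nat) (st : 'rV[F]_m * 'rV[F]_m * 'rV[F]_m)
  (c : choice_t m) : 'rV[F]_m * 'rV[F]_m * 'rV[F]_m :=
  let: (x, h, h') := st in
  let: (s, s', t, t', hn) := c in
  (x + s *: h + s' *: h', t *: h + t' *: h', hn).

Fixpoint walk (m : nat) (x h0 h0' : 'rV[F]_m) (w : nat -> choice_t m) (i : nat)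
  : 'rV[F]_m * 'rV[F]_m * 'rV[F]_m :=
  match i with
  | 0 => (x, h0, h0')
  | i'.+1 => walk_step (walk x h0 h0' w i') (w i')
  end.

Definition choice_dflt (m : nat) : choice_t m := (0, 0, 0, 0, 0).

Definition seq_of_ffun (m R : nat) (w : {ffun 'I_R -> choice_t m}) :
  nat -> choice_t m :=
  fun i => match (insub i : option 'I_R) with
           | Some j => w j
           | None => choice_dflt m
           end.

(* sample space of the remaining randomness (P_0 fixed), uniform *)
Definition Omega (m : nat) (H : {set F}) (R : nat) :
  {set {ffun 'I_R -> choice_t m}} :=
  [set w : {ffun 'I_R -> choice_t m} | [forall j, inHm H (w j).2]].

Definition Pr (m : nat) (H : {set F}) (R : nat)
  (A : {ffun 'I_R -> choice_t m} -> bool) : rat :=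
  #|[set w in Omega m H R | A w]|%:R / #|Omega m H R|%:R.

Section Events.
Variables (m R d : nat) (rho : rat) (f : 'rV[F]_m -> F) (x h0 h0' : 'rV[F]_m).

Definition n_F : rat := #|[set: F]|%:R.
Definition delta_of : rat := 1 - d%:R / n_F.

Definition walk_at (w : {ffun 'I_R -> choice_t m}) (i : nat) :=
  walk x h0 h0' (seq_of_ffun w) i.

Definition Fev (w : {ffun 'I_R -> choice_t m}) (i : nat) : bool :=
  let: (xi, hi, hi') := walk_at w i in
  (2 * rho * n_F <= (Nline f xi hi)%:R) &&
  ((delta_of - 2 * rho) * n_F ^+ 2 <= (Nplane f xi hi hi')%:R).

Definition Eev (w : {ffun 'I_R -> choice_t m}) (i : nat) : bool :=
  let: (xi, hi, hi') := walk_at w i in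
  (2 * rho * n_F <= (Nline f xi hi)%:R) &&
  ((Nplane f xi hi hi')%:R < (delta_of - 2 * rho) * n_F ^+ 2).

End Events.
End PlaneLineWalk.

(* Main.v *)
Require Import Defs.
From HB Require Import structures.
From mathcomp Require Import all_boot all_order all_algebra.
From mathcomp Require Import ring lra zify.
Import Order.TTheory GRing.Theory Num.Theory.
Local Open Scope ring_scope.
Set Implicit Arguments. Unset Strict Implicit. Unset Printing Implicit Defensive.
Section Var.
Variable F : finFieldType.
Local Notation nn := (#|F|%:R : rat).

Lemma sum_constF (c : rat) : \sum_(u : F) c = nn * c.
Proof. by rewrite sumr_const mulr_natl. Qed.

Lemma sum_trans2 (phi : F -> rat) (tau : F) :
  \sum_(s : F) \sum_(t : F) phi (s + tau * t) = nn * \sum_(s : F) phi s.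
Proof.
rewrite exchange_big /=.
rewrite (eq_bigr (fun _ => \sum_s phi s)); last first.
  by move=> t _; rewrite [RHS](reindex_inj (addIr (tau * t))).
by rewrite sumr_const mulr_natl.
Qed.

Lemma sum_lin (phi : F -> F -> rat) (a b : F) : a != b ->
  \sum_(s : F) \sum_(t : F) phi (s + a * t) (s + b * t)
  = \sum_(u : F) \sum_(v : F) phi u v.
Proof.
move=> hab; rewrite !pair_big /=.
have inj : injective (fun p : F * F => (p.1 + a * p.2, p.1 + b * p.2)).
  move=> [s1 t1] [s2 t2] /= [e1 e2].
  have ht : t1 = t2.
    apply/eqP; rewrite -subr_eq0.
    have : (a - b) * (t1 - t2) = 0.
      transitivity ((s1 + a * t1 - (s2 + a * t2)) - (s1 + b * t1 - (s2 + b * t2))).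
        ring.
      by rewrite e1 e2 !subrr.
    by move/eqP; rewrite mulf_eq0 !subr_eq0 (negbTE hab).
  by subst t2; move/addIr: e1 => ->.
by rewrite [RHS](reindex_inj inj).
Qed.

Lemma pairE (T1 T2 : finType) (G : T1 * T2 -> rat) :
  \sum_(w : T1 * T2) G w = \sum_(p : T1) \sum_(q : T2) G (p, q).
Proof. by rewrite pair_big; apply: eq_big => // -[]. Qed.

Lemma sum4E (G : (F * F) * (F * F) -> rat) :
  \sum_(w : (F * F) * (F * F)) G w
  = \sum_(s : F) \sum_(t : F) \sum_(s' : F) \sum_(t' : F) G ((s, t), (s', t')).
Proof.
rewrite pairE pairE; apply: eq_bigr => s _; apply: eq_bigr => t _.
by rewrite pairE.
Qed.

Lemma swap5 (X : F -> F -> F -> F -> F -> rat) :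
  \sum_(s : F) \sum_(t : F) \sum_(s' : F) \sum_(t' : F) \sum_(u : F) X s t s' t' u
  = \sum_(u : F) \sum_(s : F) \sum_(t : F) \sum_(s' : F) \sum_(t' : F) X s t s' t' u.
Proof.
under eq_bigr => s _ do under eq_bigr => t _ do under eq_bigr => s' _ do rewrite exchange_big.
under eq_bigr => s _ do under eq_bigr => t _ do rewrite exchange_big.
under eq_bigr => s _ do rewrite exchange_big.
by rewrite exchange_big.
Qed.

Variable z : F -> F -> bool.
Let zz a b : rat := (z a b)%:R.
Let NN : rat := \sum_(a : F) \sum_(b : F) zz a b.
Let pt (w : (F * F) * (F * F)) (u : F) := (w.1.1 + u * w.1.2, w.2.1 + u * w.2.2).
Let cnt (w : (F * F) * (F * F)) : rat := \sum_(u : F) zz (pt w u).1 (pt w u).2.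

Lemma sum_one (u : F) : \sum_w zz (pt w u).1 (pt w u).2 = nn ^+ 2 * NN.
Proof.
rewrite sum4E /=.
under eq_bigr => s _ do under eq_bigr => t _ do
  rewrite (sum_trans2 (fun y => zz (s + u * t) y)).
rewrite (sum_trans2 (fun y => nn * \sum_(s0 : F) zz y s0)) -mulr_sumr.
by rewrite expr2 mulrA.
Qed.

Lemma sum_two (u v : F) : u != v ->
  \sum_w zz (pt w u).1 (pt w u).2 * zz (pt w v).1 (pt w v).2 = NN ^+ 2.
Proof.
move=> huv; rewrite sum4E /=.
under eq_bigr => s _ do under eq_bigr => t _ do
  rewrite (sum_lin (fun a b => zz (s + u * t) a * zz (s + v * t) b) huv).
rewrite (sum_lin (fun a b => \sum_a' \sum_b' zz a a' * zz b b') huv).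
rewrite expr2 /NN mulr_suml; apply: eq_bigr => a _.
rewrite exchange_big mulr_suml; apply: eq_bigr => a' _.
by rewrite mulr_sumr; apply: eq_bigr => b _; rewrite mulr_sumr.
Qed.

Lemma sum_cnt : \sum_w cnt w = nn ^+ 3 * NN.
Proof.
rewrite /cnt sum4E swap5.
under eq_bigr => u _ do rewrite -(sum4E (fun w => zz (pt w u).1 (pt w u).2)) sum_one.
by rewrite sum_constF mulrA -exprS.
Qed.

Lemma zz2 a b : zz a b ^+ 2 = zz a b.
Proof. by rewrite /zz; case: (z a b); rewrite ?expr1n ?expr0n. Qed.

Lemma sum_cnt2 : \sum_w cnt w ^+ 2 = nn * (nn ^+ 2 * NN + (nn - 1) * NN ^+ 2).
Proof.
rewrite /cnt.
under eq_bigr => w _ do rewrite expr2 big_distrlr /=.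
rewrite exchange_big /=.
under eq_bigr => u _ do rewrite exchange_big /=.
rewrite -sum_constF.
apply: eq_bigr => u _.
rewrite (bigD1 u) //=.
under eq_bigr => w _ do rewrite -expr2 zz2.
rewrite sum_one; congr (_ + _).
rewrite (eq_bigr (fun _ => NN ^+ 2)); last first.
  by move=> v; rewrite eq_sym => huv; apply: sum_two.
rewrite sumr_const -[LHS]mulr_natr mulrC; congr (_ * _).
have -> : #|(fun i : F => i != u)| = #|F|.-1 by rewrite -(cardC1 u); apply: eq_card.
have hF : (0 < #|F|)%N by apply/card_gt0P; exists u.
by rewrite -subn1 natrB.
Qed.

Lemma nn_gt0 : 0 < nn.
Proof. by rewrite ltr0n; apply/card_gt0P; exists 0. Qed.

Lemma var_bound (th : rat) : th <= NN / nn ->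
  (\sum_w ((cnt w < th)%R)%:R) * (NN / nn - th) ^+ 2 <= nn * NN * (nn ^+ 2 - NN).
Proof.
move=> hth; set mu := NN / nn.
have hn : nn != 0 by rewrite gt_eqF // nn_gt0.
apply: (@le_trans _ _ (\sum_w (cnt w - mu) ^+ 2)).
  rewrite mulr_suml; apply: ler_sum => w _.
  case: (boolP (cnt w < th)) => h; last by rewrite mul0r sqr_ge0.
  rewrite mul1r; have h1 : 0 <= mu - th by rewrite subr_ge0.
  nra.
rewrite (eq_bigr (fun w => cnt w ^+ 2 - 2 * mu * cnt w + mu ^+ 2)); last first.
  by move=> w _; ring.
rewrite big_split /= sumrB -mulr_sumr sum_cnt2 sum_cnt sumr_const.
rewrite !card_prod -[mu ^+ 2 *+ _]mulr_natr !natrM.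
rewrite /mu le_eqVlt; apply/orP; left; apply/eqP; field; exact: hn.
Qed.
End Var.

Lemma card_setR (T : finType) (P : pred T) :
  (#|[set x | P x]|%:R : rat) = \sum_x (P x : nat)%:R.
Proof.
rewrite -sum1_card natr_sum big_mkcond /=; apply: eq_bigr => y _.
by rewrite inE; case: (P y).
Qed.

Section Plane.
Variables (F : finFieldType) (m : nat) (f : 'rV[F]_m -> F).
Local Notation nn := (#|F|%:R : rat).

Definition zf (a h h' : 'rV[F]_m) (p q : F) : bool := f (a + p *: h + q *: h') != 0.

Definition lineN (a h h' : 'rV[F]_m) (c : F * F * F * F) : nat :=
  Nline f (a + c.1.1.1 *: h + c.1.1.2 *: h') (c.1.2 *: h + c.2 *: h').

Lemma vec_id (a h h' : 'rV[F]_m) (s s' t t' u : F) :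
  a + s *: h + s' *: h' + u *: (t *: h + t' *: h')
  = a + (s + u * t) *: h + (s' + u * t') *: h'.
Proof.
rewrite scalerDr !scalerA !scalerDl -!addrA; congr (_ + _).
by congr (_ + _); rewrite addrCA.
Qed.

Lemma lineN_sum a h h' s s' t t' :
  ((lineN a h h' (s, s', t, t'))%:R : rat)
  = \sum_(u : F) (zf a h h' (s + u * t) (s' + u * t') : nat)%:R.
Proof.
rewrite /lineN /Nline /= card_setR; apply: eq_bigr => u _.
by rewrite vec_id.
Qed.

Lemma Nplane_sum a h h' :
  ((Nplane f a h h')%:R : rat) = \sum_(p : F) \sum_(q : F) (zf a h h' p q : nat)%:R.
Proof. by rewrite /Nplane card_setR pairE. Qed.

Definition indR (b : bool) : rat := (b : nat)%:R.

Lemma bad_sum a h h' (th : rat) :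
  \sum_(c : F * F * F * F) indR ((lineN a h h' c)%:R < th)
  = \sum_(w : (F * F) * (F * F))
      indR (\sum_(u : F) indR (zf a h h' (w.1.1 + u * w.1.2) (w.2.1 + u * w.2.2))
         < th).
Proof.
rewrite sum4E pairE pairE pairE /=.
apply: eq_bigr => s _; rewrite exchange_big /=.
apply: eq_bigr => t _; apply: eq_bigr => s' _; apply: eq_bigr => t' _.
by rewrite lineN_sum.
Qed.
End Plane.

Lemma arith4 (nn D rho N B : rat) : 4 <= nn -> 0 <= D -> 4 * D <= nn -> 0 < rho ->
  8 * rho * nn <= nn - D ->
  (nn - 1) * (nn ^+ 2 - 2 * rho * nn ^+ 2 - N) <= nn ^+ 2 * D -> 0 <= B ->
  (2 * rho * nn <= N / nn -> B * (N / nn - 2 * rho * nn) ^+ 2 <= nn * N * (nn ^+ 2 - N)) ->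
  B <= 4 / nn * nn ^+ 4.
Proof.
move=> h4 hD hD4 hr hr8 hyp hB hv.
have hn : 0 < nn by lra.
have k1 : nn * (nn - 1) * (3 / 4 * nn - 4 * rho * nn) >= nn ^+ 2 * D.
  have e1 : (nn - 1) * (nn / 4 + D / 2) <= (nn - 1) * (3 / 4 * nn - 4 * rho * nn).
    apply: ler_wpM2l; lra.
  have e2 : nn * D <= (nn - 1) * (nn / 4 + D / 2) by nra.
  rewrite expr2 -mulrA; rewrite -mulrA; apply: ler_wpM2l; lra.
have k2 : (nn - 1) * N >= (nn - 1) * (nn ^+ 2 / 4 + 2 * rho * nn ^+ 2).
  have : nn * (nn - 1) * (3 / 4 * nn - 4 * rho * nn) = (nn - 1) * (nn ^+ 2 - 2 * rho * nn ^+ 2 - (nn ^+ 2 / 4 + 2 * rho * nn ^+ 2)).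
    by rewrite !expr2; field.
  nra.
have k3 : N >= nn ^+ 2 / 4 + 2 * rho * nn ^+ 2.
  by rewrite -(ler_pM2l (_ : 0 < nn - 1)) //; lra.
have k4 : N / nn - 2 * rho * nn >= nn / 4.
  rewrite lerBrDr ler_pdivlMr //.
  have : (nn / 4 + 2 * rho * nn) * nn = nn ^+ 2 / 4 + 2 * rho * nn ^+ 2 by rewrite expr2; field.
  lra.
have {}hv : B * (N / nn - 2 * rho * nn) ^+ 2 <= nn * N * (nn ^+ 2 - N).
  by apply: hv; lra.
have k5 : nn * N * (nn ^+ 2 - N) <= nn ^+ 5 / 4.
  have : nn ^+ 5 / 4 - nn * N * (nn ^+ 2 - N) = nn * (nn ^+ 2 / 2 - N) ^+ 2.
    by rewrite !exprS expr0; field.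
  have : 0 <= nn * (nn ^+ 2 / 2 - N) ^+ 2 by rewrite mulr_ge0 ?sqr_ge0 ?ltW.
  lra.
have k6 : B * (nn / 4) ^+ 2 <= B * (N / nn - 2 * rho * nn) ^+ 2.
  apply: ler_wpM2l => //; rewrite ler_pXn2r ?nnegrE //; lra.
have k7 : B * nn ^+ 2 <= 4 * nn ^+ 5.
  have : B * (nn / 4) ^+ 2 = B * nn ^+ 2 / 16 by rewrite expr2; field.
  lra.
have -> : 4 / nn * nn ^+ 4 = 4 * nn ^+ 5 / nn ^+ 2.
  rewrite !exprS expr0; field; lra.
rewrite ler_pdivlMr ?exprn_gt0 //.
Qed.

Lemma arith3 (nn rho N B : rat) : nn = 3%:R -> 0 < rho ->
  8 * rho * nn <= nn ->
  (nn - 1) * (nn ^+ 2 - 2 * rho * nn ^+ 2 - N) <= nn ^+ 2 * 0 -> 0 <= B ->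
  (2 * rho * nn <= N / nn -> B * (N / nn - 2 * rho * nn) ^+ 2 <= nn * N * (nn ^+ 2 - N)) ->
  B <= 1 / 3%:R * nn ^+ 4.
Proof.
move=> -> hr hr8 hyp hB hv.
have k3 : N >= 9%:R - 18%:R * rho by rewrite !expr2 in hyp; nra.
have k4 : N / 3%:R - 2 * rho * 3%:R >= 3%:R / 2.
  rewrite lerBrDr ler_pdivlMr //; lra.
have {}hv : B * (N / 3%:R - 2 * rho * 3%:R) ^+ 2 <= 3%:R * N * (3%:R ^+ 2 - N).
  by apply: hv; lra.
have k5 : 3%:R * N * (3%:R ^+ 2 - N) <= 3%:R ^+ 5 / 4.
  have : 3%:R ^+ 5 / 4 - 3%:R * N * (3%:R ^+ 2 - N) = 3%:R * (3%:R ^+ 2 / 2 - N) ^+ 2 :> rat.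
    by rewrite !exprS expr0; field.
  have : 0 <= 3%:R * (3%:R ^+ 2 / 2 - N) ^+ 2 :> rat by rewrite mulr_ge0 ?sqr_ge0.
  lra.
have k6 : B * (3%:R / 2) ^+ 2 <= B * (N / 3%:R - 2 * rho * 3%:R) ^+ 2.
  apply: ler_wpM2l => //; rewrite ler_pXn2r ?nnegrE //; lra.
rewrite !exprS expr0 in k5 k6 *; lra.
Qed.

Lemma n2_all (F : finFieldType) (f : 'rV[F]_1 -> F) (a h h' : 'rV[F]_1) :
  (2 < Nplane f a h h')%N -> #|F| = 2%N -> forall p q, zf f a h h' p q.
Proof.
move=> hN h2 p q; apply: contraT => hz.
have [e1 [e2 [hne he]]] : exists e1 e2 : F, (e1, e2) != (0, 0) /\ e1 *: h + e2 *: h' = 0.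
  case: (eqVneq (h 0 0) 0) => h00.
    exists 1, 0; split; first by rewrite xpair_eqE oner_eq0.
    by apply/rowP => j; rewrite ord1 !mxE h00 mul1r mul0r addr0.
  exists (- h' 0 0 / h 0 0), 1; split; first by rewrite xpair_eqE oner_eq0 andbF.
  by apply/rowP => j; rewrite ord1 !mxE; field.
pose Z := [set pq : F * F | ~~ zf f a h h' pq.1 pq.2].
have sub : [set (p, q); (p + e1, q + e2)] \subset Z.
  apply/subsetP => y; rewrite !inE => /orP[/eqP->|/eqP->] //=.
  rewrite /zf negbK.
  have -> : a + (p + e1) *: h + (q + e2) *: h' = a + p *: h + q *: h' + (e1 *: h + e2 *: h').
    by rewrite !scalerDl -!addrA; congr (_ + _); congr (_ + _); exact: addrCA.
  by rewrite he addr0; exact: negbNE hz.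
have c2 : #|[set (p, q); (p + e1, q + e2)]| = 2%N.
  rewrite cards2; case: eqP => //= [[e1' e2']]; exfalso; move: hne.
  have -> : e1 = 0 by apply: (addrI p); rewrite addr0 -e1'.
  have -> : e2 = 0 by apply: (addrI q); rewrite addr0 -e2'.
  by rewrite eqxx.
have hZ := subset_leq_card sub; rewrite c2 in hZ.
have hC := cardsC Z.
have eN : Nplane f a h h' = #|~: Z|.
  by rewrite /Nplane; apply: eq_card => y; rewrite !inE negbK.
rewrite eN in hN; move: hC hZ hN; rewrite card_prod h2; lia.
Qed.

Lemma ext_m1 (F : finFieldType) (H : {set F}) m : ext_degree H m -> #|F| = 2%N -> m = 1%N.
Proof.
case=> [[h1 hsub _ _] hc] h2.
have h0 : (0 : F) \in H by rewrite -(subrr (1 : F)); apply: hsub.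
have hH2 : (2 <= #|H|)%N.
  have : [set (0 : F); 1] \subset H by apply/subsetP => y; rewrite !inE => /orP[/eqP->|/eqP->].
  move/subset_leq_card; rewrite cards2 eq_sym oner_eq0 //.
have hHle : (#|H| <= #|F|)%N by apply: max_card.
rewrite cardsT h2 in hc.
have hH : #|H| = 2%N by lia.
rewrite hH in hc; move: hc; case: m => [|[|m']] //.
have := expn_gt0 2 m'; rewrite !expnS; lia.
Qed.

Lemma card_ge2 (F : finFieldType) : (2 <= #|F|)%N.
Proof.
have : [set (0 : F); 1] \subset [set: F] by apply/subsetP => y; rewrite !inE.
by move/subset_leq_card; rewrite cards2 eq_sym oner_eq0 cardsT.
Qed.

Lemma d_small (d n : nat) : (4 * d <= n)%N -> (n <= 3)%N -> d = 0%N.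
Proof. lia. Qed.

Lemma n_ge4 (n : nat) : (2 <= n)%N -> n <> 2%N -> n <> 3%N -> (4 <= n)%N.
Proof. lia. Qed.

Definition qn (F : finFieldType) : rat :=
  if #|F| == 2%N then 0 else if #|F| == 3%N then 1 / 3%:R else 4 / #|F|%:R.

Lemma bad_bound (F : finFieldType) (H : {set F}) m (f : 'rV[F]_m -> F) d rho
  (a h h' : 'rV[F]_m) :
  ext_degree H m -> 3%:R / 4%:R <= delta_of F d -> 0 < rho -> rho <= delta_of F d / 8%:R ->
  (#|F|%:R - 1) * (#|F|%:R ^+ 2 - 2 * rho * #|F|%:R ^+ 2 - (Nplane f a h h')%:R)
    <= #|F|%:R ^+ 2 * d%:R ->
  \sum_c indR ((lineN f a h h' c)%:R < 2 * rho * n_F F) <= qn F * #|F|%:R ^+ 4.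
Proof.
move=> hext hdel hr hrd hyp.
have nF : n_F F = #|F|%:R by rewrite /n_F cardsT.
rewrite /delta_of nF in hdel hrd; rewrite nF.
set nn := (#|F|%:R : rat) in hdel hrd hyp *.
have hn2 := card_ge2 F.
have hnn : 2%:R <= nn by rewrite ler_nat.
have hn0 : 0 < nn by lra.
set D := (d%:R : rat) in hdel hrd hyp *.
have hD0 : 0 <= D by rewrite ler0n.
have hD : 4 * D <= nn.
  have : D / nn <= 1 / 4 by lra.
  by rewrite ler_pdivrMr //; lra.
have hr8 : 8 * rho * nn <= nn - D.
  have : 8 * rho <= 1 - D / nn by lra.
  rewrite -(ler_pM2r hn0) mulrBl mul1r mulfVK ?gt_eqF //.
set N := ((Nplane f a h h')%:R : rat) in hyp *.
set B := \sum_c _.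
have hB : 0 <= B by apply: sumr_ge0 => c _; rewrite /indR ler0n.
have hv : 2 * rho * nn <= N / nn -> B * (N / nn - 2 * rho * nn) ^+ 2 <= nn * N * (nn ^+ 2 - N).
  move=> hth; rewrite /B bad_sum.
  have eN : \sum_(a0 : F) \sum_(b : F) (zf f a h h' a0 b : nat)%:R = N by rewrite /N Nplane_sum.
  have := @var_bound F (zf f a h h') (2 * rho * nn); rewrite eN; apply; exact: hth.
rewrite /qn; case: eqP => [e2|ne2].
  have hd0 : D = 0.
    have : (4 * d <= 2)%N by move: hD; rewrite /nn e2 /D -natrM ler_nat.
    by move/d_small => hd; rewrite /D hd.
  rewrite hd0 in hyp hr8.
  have hN : (2 < Nplane f a h h')%N.
    rewrite -(ltr_nat rat) -/N.
    have e2' : nn = 2%:R by rewrite /nn e2.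
    rewrite e2' !expr2 mulr0 in hyp hr8; lra.
  have hm := ext_m1 hext e2; subst m.
  have hall := n2_all hN e2.
  rewrite mul0r /B big1 // => -[[[s s'] t] t'] _.
  rewrite lineN_sum.
  rewrite (eq_bigr (fun _ => 1)); last by move=> u _; rewrite hall.
  rewrite sumr_const /indR.
  have -> : ((1 : rat) *+ #|F| < 2 * rho * nn) = false.
    apply/negbTE; rewrite -leNgt; change (2 * rho * nn <= nn).
    have : 0 <= rho * nn by rewrite mulr_ge0 // ltW.
    rewrite -mulrA; lra.
  by [].
case: eqP => [e3|ne3].
  have hd0 : D = 0.
    have : (4 * d <= 3)%N by move: hD; rewrite /nn e3 /D -natrM ler_nat.
    by move/d_small => hd; rewrite /D hd.
  rewrite hd0 in hyp hr8.
  apply: (@arith3 nn rho N B) => //.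
  - by rewrite /nn e3.
  - lra.
have h4 : 4%:R <= nn by rewrite ler_nat; apply: n_ge4.
apply: (@arith4 nn D rho N B) => //.
Qed.

Section SZ.
Variables (F : finFieldType) (d : nat) (c : 'I_d.+1 -> 'I_d.+1 -> F).
Hypothesis hc : forall i j : 'I_d.+1, (d < i + j)%N -> c i j = 0.
Hypothesis hc0 : c ord0 ord0 != 0.

Definition Pu (u : F * F) : {poly F} :=
  \sum_(i < d.+1) \sum_(j < d.+1) (c i j * u.1 ^+ i * u.2 ^+ j) *: 'X^(i + j)%N.

Lemma Pu_eval u t :
  (Pu u).[t] = \sum_(i < d.+1) \sum_(j < d.+1) c i j * (t * u.1) ^+ i * (t * u.2) ^+ j.
Proof.
rewrite /Pu horner_sum; apply: eq_bigr => i _.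
rewrite horner_sum; apply: eq_bigr => j _.
rewrite hornerZ hornerXn !exprMn exprD; ring.
Qed.

Lemma Pu_size u : (size (Pu u) <= d.+1)%N.
Proof.
apply/leq_sizeP => k hk.
rewrite /Pu coef_sum big1 // => i _; rewrite coef_sum big1 // => j _.
rewrite coefZ coefXn; case: eqP => [ek|]; last by rewrite mulr0.
by rewrite hc ?mul0r // -ek.
Qed.

Lemma Pu_coef u k : (Pu u)`_k =
  \sum_(i < d.+1) \sum_(j < d.+1) c i j * u.1 ^+ i * u.2 ^+ j * (k == (i + j)%N)%:R.
Proof.
rewrite /Pu coef_sum; apply: eq_bigr => i _; rewrite coef_sum; apply: eq_bigr => j _.
by rewrite coefZ coefXn.
Qed.

Lemma Pu_coef0 u : (Pu u)`_0 = c ord0 ord0.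
Proof.
rewrite Pu_coef (bigD1 ord0) //= [X in _ + X = _]big1 ?addr0; last first.
  move=> i hi; rewrite big1 // => j _.
  rewrite eq_sym addn_eq0.
  have -> : (i == 0 :> nat) = false by move: hi; rewrite -val_eqE /= => /negbTE.
  by rewrite /= mulr0.
rewrite (bigD1 ord0) //= [X in _ + X = _]big1 ?addr0; last first.
  move=> j hj; rewrite eq_sym addn_eq0 /=.
  have -> : (j == 0 :> nat) = false by move: hj; rewrite -val_eqE /= => /negbTE.
  by rewrite mulr0.
by rewrite /= !expr0 !mulr1.
Qed.

Lemma Pu_neq0 u : Pu u != 0.
Proof. by apply: contraNneq hc0 => e; rewrite -(Pu_coef0 u) e coef0. Qed.

Lemma Pu_roots u : (#|[set t | root (Pu u) t]| <= d)%N.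
Proof.
have := max_poly_roots (Pu_neq0 u) (rs := enum [set t | root (Pu u) t]).
rewrite enum_uniq -cardE => /(_ _ isT) h.
have : (#|[set t | root (Pu u) t]| < d.+1)%N.
  apply: leq_trans (Pu_size u); apply: h.
  by apply/allP => t; rewrite mem_enum inE.
by [].
Qed.

Variable v : F * F -> F.
Hypothesis hv : forall p, v p = \sum_(i < d.+1) \sum_(j < d.+1) c i j * p.1 ^+ i * p.2 ^+ j.

Lemma sz_lite :
  (#|F|%:R - 1) * (#|[set p | v p == 0]|%:R) <= #|F|%:R ^+ 2 * (d%:R : rat).
Proof.
pose L := \sum_(u : F * F) \sum_(t : F) indR (v (t * u.1, t * u.2) == 0).
have h1 : L <= #|F|%:R ^+ 2 * d%:R.
  apply: (@le_trans _ _ (\sum_(u : F * F) (d%:R : rat))).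
    apply: ler_sum => u _.
    have -> : \sum_(t : F) indR (v (t * u.1, t * u.2) == 0)
              = (#|[set t | root (Pu u) t]|%:R : rat).
      rewrite card_setR; apply: eq_bigr => t _.
      by rewrite /root Pu_eval hv.
    by rewrite ler_nat Pu_roots.
  by rewrite sumr_const card_prod -[_ *+ _]mulr_natl natrM expr2.
have h2 : (#|F|%:R - 1) * (#|[set p | v p == 0]|%:R) <= L.
  rewrite /L exchange_big /= (bigD1 (0 : F)) //=.
  have hZ : forall t : F, t != 0 ->
      \sum_(u : F * F) indR (v (t * u.1, t * u.2) == 0) = #|[set p | v p == 0]|%:R.
    move=> t ht; rewrite card_setR.
    have inj : injective (fun u : F * F => (t * u.1, t * u.2)).
      by move=> [a1 a2] [b1 b2] /= [/(mulfI ht) -> /(mulfI ht) ->].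
    by rewrite [RHS](reindex_inj inj).
  rewrite [X in _ <= _ + X](eq_bigr (fun _ => (#|[set p | v p == 0]|%:R : rat))); last first.
    by move=> t ht; rewrite hZ.
  rewrite sumr_const.
  have -> : #|(fun i : F => i != 0)| = #|F|.-1.
    by rewrite -(cardC1 0); apply: eq_card.
  have hF : (0 < #|F|)%N by apply/card_gt0P; exists 0.
  rewrite -[_ *+ #|F|.-1]mulr_natl -subn1 natrB // mulrC.
  rewrite -[X in X <= _]add0r lerD2r.
  by apply: sumr_ge0 => u _; rewrite /indR ler0n.
exact: le_trans h2 h1.
Qed.
End SZ.

Lemma state0_hyp (F : finFieldType) m (f : 'rV[F]_m -> F) (x h0 h0' : 'rV[F]_m) d rho :
  f x != 0 -> rho <= 1 / 8%:R ->
  distA_RM_lt [set (0, 0)] (plane_restr f x h0 h0') d rho ->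
  (#|F|%:R - 1) * (#|F|%:R ^+ 2 - 2 * rho * #|F|%:R ^+ 2 - (Nplane f x h0 h0')%:R)
    <= #|F|%:R ^+ 2 * d%:R.
Proof.
move=> hfx hr [v [c [hc hv]] hdist].
set u := plane_restr f x h0 h0' in hdist *.
set nn := (#|F|%:R : rat).
have hn0 : 0 < nn by rewrite ltr0n; apply/card_gt0P; exists 0.
have hu00 : u (0, 0) = f x by rewrite /u /plane_restr /= !scale0r !addr0.
move: hdist; rewrite /distA cards1 cardsT card_prod.
set D1 := #|[set i in _ | _]|; set D2 := #|[set i | _]|.
move=> hdist.
have hD2 : 0 <= (D1%:R : rat) / (2 * 1%:R) by rewrite divr_ge0 ?mulr_ge0 ?ler0n.
have huv : u (0, 0) = v (0, 0).
  apply/eqP; apply: contraTT hdist => ne.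
  have -> : D1 = 1%N.
    rewrite /D1 -(cards1 ((0 : F), (0 : F))); apply: eq_card => i.
    by rewrite !inE; case: eqP => // ->.
  rewrite -leNgt.
  have : 0 <= (D2%:R : rat) / (2 * (#|F| * #|F|)%:R) by rewrite divr_ge0 ?mulr_ge0 ?ler0n.
  lra.
have hdis : (D2%:R : rat) < 2 * rho * nn ^+ 2.
  have h2 : (D2%:R : rat) / (2 * (#|F| * #|F|)%:R) < rho by lra.
  move: h2; rewrite natrM -/nn ltr_pdivrMr; last by rewrite !mulr_gt0.
  rewrite expr2; move=> h; apply: (lt_le_trans h); rewrite le_eqVlt; apply/orP; left; apply/eqP; ring.
have hc0 : c ord0 ord0 != 0.
  rewrite -(Pu_coef0 c (0, 0)) -horner_coef0 Pu_eval.
  by rewrite /= !mul0r; have := hv (0, 0); rewrite /= => <-; rewrite -huv hu00.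
have hsz := sz_lite hc hc0 hv.
set Z := #|[set p | v p == 0]| in hsz.
have hcov : (#|F| * #|F| <= Z + D2 + Nplane f x h0 h0')%N.
  rewrite -card_prod -cardsT.
  apply: (leq_trans (subset_leq_card (_ : [set: F * F] \subset
     ([set p | v p == 0] :|: [set p | u p != v p]) :|: [set p | plane_restr f x h0 h0' p != 0]))).
    apply/subsetP => p _; rewrite !inE.
    case: (eqVneq (v p) 0) => //= hvp; case: (eqVneq (u p) (v p)) => //= hup.
    by rewrite /u in hup; rewrite hup.
  apply: (leq_trans (leq_card_setU _ _)); rewrite leq_add2r.
  exact: leq_card_setU.
have hcov' : nn ^+ 2 <= Z%:R + D2%:R + (Nplane f x h0 h0')%:R.
  by rewrite expr2 -natrM -!natrD ler_nat.
have hn1 : 0 <= nn - 1 by rewrite subr_ge0 ler1n; apply/card_gt0P; exists 0.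
apply: le_trans hsz; apply: ler_wpM2l => //; lra.
Qed.

Section Walk.
Variables (F : finFieldType) (m R : nat) (x h0 h0' : 'rV[F]_m).
Local Notation W := {ffun 'I_R -> choice_t F m}.

Lemma walk_dep (w w' : W) i :
  (forall j : 'I_R, (j < i)%N -> w j = w' j) ->
  walk_at x h0 h0' w i = walk_at x h0 h0' w' i.
Proof.
elim: i => [//|i IH] hw.
rewrite /walk_at /= -!/(walk_at _ _ _ _ _) IH; last by move=> j hj; apply: hw; apply: ltnW.
congr walk_step; rewrite /seq_of_ffun.
by case: insubP => [j _ ej|//]; rewrite hw // ej.
Qed.

Lemma seq_ord (w : W) (k : 'I_R) : seq_of_ffun w k = w k.
Proof. by rewrite /seq_of_ffun valK. Qed.

Lemma walk_S (w : W) (k : 'I_R) :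
  walk_at x h0 h0' w k.+1 = walk_step (walk_at x h0 h0' w k) (w k).
Proof. by rewrite /walk_at /= seq_ord. Qed.

Definition upd (w : W) (k : 'I_R) (c : choice_t F m) : W :=
  [ffun j => if j == k then c else w j].

Lemma upd_walk (w : W) (k : 'I_R) c i : (i <= k)%N ->
  walk_at x h0 h0' (upd w k c) i = walk_at x h0 h0' w i.
Proof.
move=> hi; apply: walk_dep => j hj; rewrite ffunE.
by case: eqP => // ejk; move: hj; rewrite ejk ltnNge hi.
Qed.

Lemma upd_walkS (w : W) (k : 'I_R) c :
  walk_at x h0 h0' (upd w k c) k.+1 = walk_step (walk_at x h0 h0' w k) c.
Proof. by rewrite walk_S upd_walk // ffunE eqxx. Qed.

Lemma updK (w : W) (k : 'I_R) c : upd (upd w k c) k (w k) = w.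
Proof. by apply/ffunP => j; rewrite !ffunE; case: eqP => // ->. Qed.

Lemma upd_k (w : W) (k : 'I_R) c : upd w k c k = c.
Proof. by rewrite ffunE eqxx. Qed.

Variables (d : nat) (rho : rat) (f : 'rV[F]_m -> F).

Definition Aev (k : nat) (w : W) : bool := [forall j : 'I_k, Fev d rho f x h0 h0' w j.+1].

Lemma Fev_walk (w w' : W) i : walk_at x h0 h0' w i = walk_at x h0 h0' w' i ->
  Fev d rho f x h0 h0' w i = Fev d rho f x h0 h0' w' i.
Proof. by rewrite /Fev => ->. Qed.

Lemma Aev_upd (w : W) (k : 'I_R) c : Aev k (upd w k c) = Aev k w.
Proof.
apply: eq_forallb => j; apply: Fev_walk; apply: upd_walk; exact: ltn_ord.
Qed.

Lemma Aev_S (w : W) k : Aev k.+1 w = Aev k w && Fev d rho f x h0 h0' w k.+1.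
Proof.
apply/forallP/andP => [h|[/forallP h1 h2] j].
  split; last exact: (h ord_max).
  by apply/forallP => j; exact: (h (widen_ord (leqnSn k) j)).
case: (ltnP j k) => hj; first exact: (h1 (Ordinal hj)).
have -> : nat_of_ord j = k by apply/eqP; rewrite eqn_leq hj -ltnS ltn_ord.
exact: h2.
Qed.

End Walk.

Lemma indR_and a b : indR a * indR b = indR (a && b).
Proof. by rewrite /indR; case: a; case: b; rewrite ?mulr1 ?mulr0 ?mul0r. Qed.

Lemma indR_neg a : indR (~~ a) = 1 - indR a.
Proof. by rewrite /indR; case: a; rewrite ?subrr ?subr0. Qed.

Lemma indR1 : indR true = 1. Proof. by []. Qed.

Lemma indR_ge0 a : 0 <= indR a.
Proof. by rewrite /indR ler0n. Qed.

Lemma card_setR2 (T : finType) (A : {set T}) (P : pred T) :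
  (#|[set w in A | P w]|%:R : rat) = \sum_w indR ((w \in A) && P w).
Proof. by rewrite card_setR. Qed.

Section Count.
Variables (F : finFieldType) (H : {set F}) (m R : nat) (x h0 h0' : 'rV[F]_m).
Variables (d : nat) (rho : rat) (f : 'rV[F]_m -> F).
Local Notation W := {ffun 'I_R -> choice_t F m}.
Local Notation Om := (Omega m H R).
Let Cs := [set c : choice_t F m | inHm H c.2].

Definition Gev (w : W) i : bool :=
  let: (xi, hi, hi') := walk_at x h0 h0' w i in 2 * rho * n_F F <= (Nline f xi hi)%:R.

Lemma FEG (b : bool) (w : W) i :
  indR (b && Fev d rho f x h0 h0' w i) + indR (b && Eev d rho f x h0 h0' w i)
  = indR (b && Gev w i).
Proof.
rewrite /Fev /Eev /Gev; case: (walk_at x h0 h0' w i) => [[xi hi] hi'].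
rewrite ltNge; case: b; case: (_ <= (Nline _ _ _)%:R); case: (_ <= (Nplane _ _ _ _)%:R);
  by rewrite /indR /= ?addr0 ?add0r.
Qed.

Lemma omega_upd (w : W) (k : 'I_R) c :
  (upd w k c \in Om) && (w k \in Cs) = (w \in Om) && (c \in Cs).
Proof.
rewrite !inE; apply/andP/andP => [[/forallP h1 h2]|[/forallP h1 h2]]; split.
- apply/forallP => j; case: (eqVneq j k) => [->//|ne].
  by have := h1 j; rewrite ffunE (negbTE ne).
- by have := h1 k; rewrite ffunE eqxx.
- by apply/forallP => j; rewrite ffunE; case: eqP => // ->.
- exact: h1 k.
Qed.

Lemma count_step (k : 'I_R) (q : rat) : inHm H (0 : 'rV[F]_m) ->
  (forall w, w \in Om -> Aev x h0 h0' d rho f k w ->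
     \sum_(c1 : F * F * F * F)
        indR ((lineN f (walk_at x h0 h0' w k).1.1 (walk_at x h0 h0' w k).1.2
                 (walk_at x h0 h0' w k).2 c1)%:R < 2 * rho * n_F F)
     <= q * #|F|%:R ^+ 4) ->
  (1 - q) * #|[set w in Om | Aev x h0 h0' d rho f k w]|%:R
  <= #|[set w in Om | Aev x h0 h0' d rho f k w && Gev w k.+1]|%:R.
Proof.
move=> hH0 hgood.
set A := Aev x h0 h0' d rho f k.
pose T (p : W * choice_t F m) := indR (p.1 \in Om) * indR (p.2 \in Cs) * indR (A p.1)
   * indR (Gev (upd p.1 k p.2) k.+1).
pose cC : rat := #|Cs|%:R.
have hcC : 0 < cC.
  rewrite ltr0n; apply/card_gt0P; exists (0, 0, 0, 0, 0); rewrite inE; exact: hH0.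
have eq1 : \sum_p T p = cC * #|[set w in Om | A w && Gev w k.+1]|%:R.
  pose Phi (p : W * choice_t F m) := (upd p.1 k p.2, p.1 k).
  have inj : injective Phi.
    apply: (can_inj (g := Phi)) => -[w c]; rewrite /Phi /= updK upd_k //.
  rewrite (reindex_inj inj) /= pairE card_setR2 mulr_sumr; apply: eq_bigr => w _.
  rewrite /T /A /=.
  under eq_bigr => c _ do rewrite updK Aev_upd indR_and omega_upd -indR_and.
  have -> : cC = \sum_c indR (c \in Cs).
    by rewrite /cC /Cs card_setR; apply: eq_bigr => c _; rewrite inE.
  rewrite mulr_suml; apply: eq_bigr => c _; rewrite !indR_and; congr indR.
  by case: (w \in Om); case: (c \in Cs); case: (Aev _ _ _ _ _ _ _ _); case: (Gev _ _).
have eq2 : \sum_p T p = \sum_w indR (w \in Om) * indR (A w) *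
     \sum_c (indR (c \in Cs) * indR (Gev (upd w k c) k.+1)).
  rewrite pairE; apply: eq_bigr => w _; rewrite mulr_sumr; apply: eq_bigr => c _.
  by rewrite /T /=; ring.
pose hs : rat := \sum_(hn : 'rV[F]_m) indR (inHm H hn).
have hs0 : 0 <= hs by apply: sumr_ge0 => hn _; apply: indR_ge0.
have ecC : cC = #|F|%:R ^+ 4 * hs.
  rewrite /cC /Cs card_setR pairE.
  rewrite (eq_bigr (fun _ => hs)) //.
  by rewrite sumr_const !card_prod -[_ *+ _]mulr_natl !natrM !exprS expr0 mulr1 !mulrA.
have hlow : forall w, indR (w \in Om) * indR (A w) * ((1 - q) * cC) <=
    indR (w \in Om) * indR (A w) * \sum_c (indR (c \in Cs) * indR (Gev (upd w k c) k.+1)).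
  move=> w; case: (boolP (w \in Om)) => hw; last by rewrite /indR /= !mul0r.
  case: (boolP (A w)) => ha; last by rewrite /indR /= !mulr0 !mul0r.
  rewrite !indR1 !mul1r.
  have hg := hgood w hw ha.
  set B := \sum_c1 _ in hg.
  have eG : forall c, Gev (upd w k c) k.+1 =
      ~~ ((lineN f (walk_at x h0 h0' w k).1.1 (walk_at x h0 h0' w k).1.2
                 (walk_at x h0 h0' w k).2 c.1)%:R < 2 * rho * n_F F).
    move=> [[[[s s'] t] t'] hn]; rewrite /Gev upd_walkS -leNgt.
    by case: (walk_at x h0 h0' w k) => [[a h] h'].
  under eq_bigr => c _ do rewrite eG indR_neg mulrBr mulr1.
  rewrite sumrB.
  have -> : \sum_c indR (c \in Cs) = cC.
    by rewrite /cC /Cs card_setR; apply: eq_bigr => c _; rewrite inE.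
  have -> : \sum_c indR (c \in Cs) * indR ((lineN f (walk_at x h0 h0' w k).1.1
                 (walk_at x h0 h0' w k).1.2 (walk_at x h0 h0' w k).2 c.1)%:R
                 < 2 * rho * n_F F) = B * hs.
    rewrite pairE /B mulr_suml; apply: eq_bigr => c1 _.
    rewrite /hs mulr_sumr; apply: eq_bigr => hn _; rewrite inE /=; ring.
  rewrite ecC.
  have : B * hs <= q * #|F|%:R ^+ 4 * hs by apply: ler_wpM2r.
  lra.
have : \sum_w indR (w \in Om) * indR (A w) * ((1 - q) * cC) <=
    \sum_w indR (w \in Om) * indR (A w) * \sum_c (indR (c \in Cs) * indR (Gev (upd w k c) k.+1)).
  by apply: ler_sum => w _; exact: hlow w.
rewrite -eq2 eq1.
rewrite -mulr_suml card_setR2.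
under eq_bigr => w _ do rewrite indR_and.
rewrite -[X in X * _]card_setR2 => h.
rewrite -(ler_pM2l hcC); apply: le_trans h.
rewrite le_eqVlt; apply/orP; left; apply/eqP; ring.
Qed.
End Count.

Lemma pow_cmp (F : finFieldType) (R : nat) :
  (1 - 4%:R / n_F F) ^+ R <= (1 - qn F) ^+ R.
Proof.
rewrite /n_F cardsT /qn; have h2 := card_ge2 F.
case: eqP => [e2|ne2].
  rewrite e2; apply: (le_trans (ler_norm _)); rewrite normrX.
  have -> : (1 - 4%:R / 2%:R : rat) = - 1 by field.
  by rewrite normrN normr1 expr1n.
case: eqP => [e3|ne3].
  rewrite e3; apply: (le_trans (ler_norm _)); rewrite normrX.
  have -> : (1 - 4%:R / 3%:R : rat) = - (1 / 3%:R) by field.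
  rewrite normrN ger0_norm; last by rewrite divr_ge0.
  apply: lerXn2r; rewrite ?nnegrE; lra.
exact: le_refl.
Qed.

Lemma qn_bounds (F : finFieldType) : 0 <= qn F /\ qn F <= 1.
Proof.
rewrite /qn; have h2 := card_ge2 F.
case: eqP => [//|ne2]; case: eqP => [//|ne3].
have h4 := n_ge4 h2 ne2 ne3.
have hn : 0 < (#|F|%:R : rat) by rewrite ltr0n; lia.
split; first by rewrite divr_ge0 // ltW.
by rewrite ler_pdivrMr // mul1r ler_nat.
Qed.

Lemma fev_hyp (F : finFieldType) m R (x h0 h0' : 'rV[F]_m) d rho (f : 'rV[F]_m -> F)
  (w : {ffun 'I_R -> choice_t F m}) i :
  Fev d rho f x h0 h0' w i ->
  (#|F|%:R - 1) * (#|F|%:R ^+ 2 - 2 * rho * #|F|%:R ^+ 2 -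
     (Nplane f (walk_at x h0 h0' w i).1.1 (walk_at x h0 h0' w i).1.2
        (walk_at x h0 h0' w i).2)%:R) <= #|F|%:R ^+ 2 * d%:R.
Proof.
rewrite /Fev; case: (walk_at x h0 h0' w i) => [[a h] h'] /andP [_ hp] /=.
move: hp; rewrite /delta_of /n_F cardsT.
set nn := (#|F|%:R : rat); set D := (d%:R : rat); set N := ((Nplane f a h h')%:R : rat).
have hn2 := card_ge2 F.
have hnn : 2%:R <= nn by rewrite ler_nat.
have hD : 0 <= D by rewrite ler0n.
move=> hp.
have e : (1 - D / nn - 2 * rho) * nn ^+ 2 = nn ^+ 2 - 2 * rho * nn ^+ 2 - D * nn.
  by rewrite !expr2; field; rewrite gt_eqF //; lra.
rewrite e in hp.
have h1 : nn ^+ 2 - 2 * rho * nn ^+ 2 - N <= D * nn by lra.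
apply: (le_trans (ler_wpM2l _ h1)); first by lra.
rewrite expr2; nra.
Qed.

Unset Implicit Arguments.

Theorem mainTheorem6 (F : finFieldType) (H : {set F}) (m : nat)
  (d : nat) (rho : rat) (f : 'rV[F]_m -> F) (x : 'rV[F]_m) (R : nat)
  (h0 h0' : 'rV[F]_m) :
  ext_degree H m ->
  (d < #|[set: F]|)%N ->
  3%:R / 4%:R <= delta_of F d ->
  0 < rho -> rho <= delta_of F d / 8%:R ->
  f x != 0 ->
  (1 <= R)%N ->
  inHm H h0 -> inHm H h0' ->
  distA_RM_lt [set (0, 0)] (plane_restr f x h0 h0') d rho ->
  Pr H (fun w : {ffun 'I_R -> choice_t F m} =>
          [forall j : 'I_R, Fev d rho f x h0 h0' w j.+1])
  >= (1 - 4%:R / n_F F) ^+ R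
     - \sum_(1 <= i < R.+1)
         Pr H (fun w : {ffun 'I_R -> choice_t F m} =>
                 [forall j : 'I_i.-1, Fev d rho f x h0 h0' w j.+1]
                 && Eev d rho f x h0 h0' w i).
Proof.
move=> hext hdn hdel hr hrd hfx hR hh0 hh0' hdist.
set Om := Omega m H R.
have hH0 : inHm H (0 : 'rV[F]_m).
  case: hext => [[h1 hsub _ _] _]; apply/forallP => j; rewrite mxE.
  by rewrite -(subrr (1 : F)); apply: hsub.
have hOm : 0 < (#|Om|%:R : rat).
  rewrite ltr0n; apply/card_gt0P; exists [ffun _ => choice_dflt F m].
  by rewrite inE; apply/forallP => j; rewrite ffunE.
have [hq0 hq1] := qn_bounds F.
set q := qn F in hq0 hq1 *.
have hrho8 : rho <= 1 / 8%:R.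
  move: hrd; rewrite /delta_of.
  have : 0 <= (d%:R : rat) / n_F F by rewrite divr_ge0 ?ler0n.
  lra.
pose A k (w : {ffun 'I_R -> choice_t F m}) := Aev x h0 h0' d rho f k w.
have hgood : forall (k : 'I_R) w, w \in Om -> A k w ->
     \sum_(c1 : F * F * F * F)
        indR ((lineN f (walk_at x h0 h0' w k).1.1 (walk_at x h0 h0' w k).1.2
                 (walk_at x h0 h0' w k).2 c1)%:R < 2 * rho * n_F F)
     <= q * #|F|%:R ^+ 4.
  move=> k w hw ha.
  apply: (bad_bound (H := H) (d := d) (rho := rho)) => //.
  case: k ha => [[|k'] hk] ha /=.
    exact: state0_hyp.
  apply: fev_hyp.
  by move: ha; rewrite /A Aev_S => /andP [].
pose cnt k := (#|[set w in Om | A k w]|%:R : rat).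
pose ecnt i := (#|[set w in Om | A i.-1 w && Eev d rho f x h0 h0' w i]|%:R : rat).
have step : forall k : 'I_R, (1 - q) * cnt k - ecnt k.+1 <= cnt k.+1.
  move=> k.
  have c1 := count_step hH0 (hgood k).
  have e : #|[set w in Om | A k w && Gev x h0 h0' rho f w k.+1]|%:R = cnt k.+1 + ecnt k.+1.
    rewrite /cnt /ecnt !card_setR2 -big_split /=; apply: eq_bigr => w _.
    by rewrite /A Aev_S !andbA FEG.
  rewrite e in c1; lra.
have hS : forall k, 0 <= \sum_(1 <= i < k.+1)
         Pr H (fun w : {ffun 'I_R -> choice_t F m} =>
                 [forall j : 'I_i.-1, Fev d rho f x h0 h0' w j.+1]
                 && Eev d rho f x h0 h0' w i).
  move=> k; apply: sumr_ge0 => i _; rewrite /Pr divr_ge0 // ler0n.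
have main : forall k, (k <= R)%N ->
   (1 - q) ^+ k - \sum_(1 <= i < k.+1)
         Pr H (fun w : {ffun 'I_R -> choice_t F m} =>
                 [forall j : 'I_i.-1, Fev d rho f x h0 h0' w j.+1]
                 && Eev d rho f x h0 h0' w i) <= cnt k / #|Om|%:R.
  elim => [_|k IH hk].
    rewrite big_geq // subr0 expr0.
    have -> : cnt 0%N = #|Om|%:R.
      rewrite /cnt; congr (_%:R); apply: eq_card => w; rewrite !inE.
      by rewrite andbC; apply/andP/idP => [[]//|->]; split => //; apply/forallP => -[].
    by rewrite divff // gt_eqF.
  have := step (Ordinal hk); rewrite /= => hst.
  have := IH (ltnW hk) => hIH.
  rewrite big_nat_recr //=.
  set S := \sum_(1 <= i < k.+1) _ in hIH *.
  have hS0 : 0 <= S by apply: hS.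
  have ePr : Pr H (fun w : {ffun 'I_R -> choice_t F m} =>
                 [forall j : 'I_k, Fev d rho f x h0 h0' w j.+1]
                 && Eev d rho f x h0 h0' w k.+1) = ecnt k.+1 / #|Om|%:R by [].
  rewrite ePr exprS.
  have h1 : (1 - q) * ((1 - q) ^+ k - S) <= (1 - q) * (cnt k / #|Om|%:R).
    by apply: ler_wpM2l => //; lra.
  have h2 : ((1 - q) * cnt k - ecnt k.+1) / #|Om|%:R <= cnt k.+1 / #|Om|%:R.
    by rewrite ler_pM2r // invr_gt0.
  have h3 : (1 - q) * S <= S by rewrite ler_piMl //; lra.
  have e4 : ((1 - q) * cnt k - ecnt k.+1) / #|Om|%:R
          = (1 - q) * (cnt k / #|Om|%:R) - ecnt k.+1 / #|Om|%:R.
    by field; rewrite gt_eqF.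
  rewrite e4 in h2; lra.
have := main R (leqnn R).
have hp := pow_cmp F R.
move=> hm.
have -> : Pr H (fun w : {ffun 'I_R -> choice_t F m} =>
          [forall j : 'I_R, Fev d rho f x h0 h0' w j.+1]) = cnt R / #|Om|%:R by [].
rewrite -/q in hp; lra.
Qed.
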